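(* Let $q$ be a power of $2$. In $\mathrm{AG}(3,q^2)\subset\mathrm{PG}(3,q^2)$, with affine coordinates $x,y,z$, homogeneous coordinates $J,X,Y,Z$ and plane at infinity $\Sigma_\infty: J=0$, let $\mathcal H$ be the Hermitian surface with affine equation $z^q+z=x^{q+1}+y^{q+1}$ and let $\mathcal Q$ be an irreducible quadric with affine equation $z=ax^2+by^2+cxy+dx+ey+f$, where $a,b,c,d,e,f\in\mathrm{GF}(q^2)$. Let $\mathcal C_\infty=\mathcal Q\cap\mathcal H\cap\Sigma_\infty$. If $\mathcal Q$ is a quadratic cone, then $\mathcal C_\infty$ consists either of $1$ point or of $q^2+1$ points on a line. If $\mathcal Q$ is a hyperbolic quadric, then $\mathcal C_\infty$ consists either of $1$ point, or of $q^2+1$ points on a line, or of $2q^2+1$ points on two lines. All these cases actually occur.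
   Context: Here $P_\infty=(0,0,0,1)$ lies on both $\mathcal H$ and $\mathcal Q$, and $\Sigma_\infty$ is the common tangent plane of $\mathcal H$ and $\mathcal Q$ at $P_\infty$. A quadratic cone is the quadric projecting an irreducible conic in a plane from a vertex not on that plane. *)

(* Defs.v *)
From HB Require Import structures.
From mathcomp Require Import all_boot all_order all_algebra.
Set Implicit Arguments. Unset Strict Implicit. Unset Printing Implicit Defensive.
Import Order.TTheory GRing.Theory Num.Theory.
Local Open Scope ring_scope.

(* Points of PG(3,F) are represented by row vectors (J,X,Y,Z) in 'rV[F]_4,
   normalized so that the first nonzero coordinate equals 1.
   Coordinate indices: 0 = J, 1 = X, 2 = Y, 3 = Z. *)

Section Defs.
Variable F : fieldType.

Definition crd n (v : 'rV[F]_n.+1) (k : nat) : F := v ord0 (inord k).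

Definition pnormal n (v : 'rV[F]_n) : bool :=
  [exists i : 'I_n, (v ord0 i == 1) && [forall j : 'I_n, (j < i)%N ==> (v ord0 j == 0)]].

Definition hermF (q : nat) (v : 'rV[F]_4) : F :=
  crd v 3 ^+ q * crd v 0 + crd v 3 * crd v 0 ^+ q
  - crd v 1 ^+ q.+1 - crd v 2 ^+ q.+1.

(* homogeneous form of the quadric z = a x^2 + b y^2 + c x y + d x + e y + f:
   a X^2 + b Y^2 + c X Y + d X J + e Y J + f J^2 - Z J *)
Definition quadF (a b c d e f : F) (v : 'rV[F]_4) : F :=
  a * crd v 1 ^+ 2 + b * crd v 2 ^+ 2 + c * crd v 1 * crd v 2
  + d * crd v 1 * crd v 0 + e * crd v 2 * crd v 0 + f * crd v 0 ^+ 2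
  - crd v 3 * crd v 0.

Definition linF (l v : 'rV[F]_4) : F := \sum_(i < 4) l ord0 i * v ord0 i.

Definition irreducible_quadric (Q : 'rV[F]_4 -> F) : Prop :=
  ~ exists l1 l2 : 'rV[F]_4, forall v, Q v = linF l1 v * linF l2 v.

Definition hyperbolic_quadric (Q : 'rV[F]_4 -> F) : Prop :=
  exists (M : 'M[F]_4) (lam : F), M \in unitmx /\ lam != 0 /\
    forall v : 'rV[F]_4,
      Q (v *m M) = lam * (crd v 0 * crd v 1 + crd v 2 * crd v 3).

Definition irreducible_conic (G : 'rV[F]_3 -> F) : Prop :=
  exists (N : 'M[F]_3) (mu : F), N \in unitmx /\ mu != 0 /\
    forall w : 'rV[F]_3, G (w *m N) = mu * (crd w 0 * crd w 1 + crd w 2 ^+ 2).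

(* quadratic cone: in suitable projective coordinates v (point v *m M), the
   vertex is e_3 *m M and the form only depends on the coordinates of the
   plane v_3 = 0, where it defines an irreducible conic *)
Definition quadratic_cone (Q : 'rV[F]_4 -> F) : Prop :=
  exists (M : 'M[F]_4) (G : 'rV[F]_3 -> F), M \in unitmx /\ irreducible_conic G /\
    forall v : 'rV[F]_4,
      Q (v *m M) = G (\row_(j < 3) v ord0 (widen_ord (leqnSn 3) j)).

Definition is_line (L : 'M[F]_(2,4)) : Prop := \rank L = 2%N.
End Defs.

Definition Cinf (F' : finFieldType) (q : nat) (a b c d e f : F') : {set 'rV[F']_4} :=
  [set v : 'rV[F']_4 | [&& pnormal v, crd v 0 == 0, hermF q v == 0
                        & quadF a b c d e f v == 0]].


Definition one_point (F : finFieldType) (S : {set 'rV[F]_4}) : Prop := #|S| = 1%N.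

Definition points_on_one_line (F : finFieldType) (q : nat) (S : {set 'rV[F]_4}) : Prop :=
  #|S| = (q ^ 2 + 1)%N /\
  exists L : 'M[F]_(2,4), is_line L /\ forall v, v \in S -> (v <= L)%MS.

Definition points_on_two_lines (F : finFieldType) (q : nat) (S : {set 'rV[F]_4}) : Prop :=
  #|S| = (2 * q ^ 2 + 1)%N /\
  exists L1 L2 : 'M[F]_(2,4), [/\ is_line L1, is_line L2, ~~ (L1 == L2)%MS &
    forall v, v \in S -> (v <= L1)%MS \/ (v <= L2)%MS].

(* Main.v *)
Require Import Defs.
From HB Require Import structures.
From mathcomp Require Import all_boot all_order all_algebra all_field.
From mathcomp Require Import ring zify.
Import Order.TTheory GRing.Theory Num.Theory.
Set Implicit Arguments. Unset Strict Implicit. Unset Printing Implicit Defensive.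
Local Open Scope ring_scope.

Section Basic.
Variable F : fieldType.

Definition row4 (a b c d : F) : 'rV[F]_4 := \row_(i < 4) [:: a; b; c; d]`_i.

Lemma crd_row4 a b c d (k : nat) : (k < 4)%N ->
  crd (row4 a b c d) k = [:: a; b; c; d]`_k.
Proof. by move=> k4; rewrite /crd !mxE !inordK. Qed.

Lemma vcrd (v : 'rV[F]_4) (k : 'I_4) : v ord0 k = crd v k.
Proof. by rewrite /crd inord_val. Qed.

Lemma row4_eta (v : 'rV[F]_4) : v = row4 (crd v 0) (crd v 1) (crd v 2) (crd v 3).
Proof.
apply/rowP => k; rewrite mxE vcrd.
by case: k => [[|[|[|[|k]]]] Hk].
Qed.

Lemma row4_inj a b c d a' b' c' d' :
  row4 a b c d = row4 a' b' c' d' -> [/\ a = a', b = b', c = c' & d = d'].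
Proof.
move=> E.
have H k : (k < 4)%N -> crd (row4 a b c d) k = crd (row4 a' b' c' d') k by rewrite E.
by have := H 0%N; have := H 1%N; have := H 2%N; have := H 3%N; rewrite !crd_row4 //= => -> // -> // -> // -> .
Qed.

Lemma pnormal_inf (v : 'rV[F]_4) : crd v 0 = 0 -> pnormal v ->
  [\/ v = row4 0 1 (crd v 2) (crd v 3), v = row4 0 0 1 (crd v 3)
    | v = row4 0 0 0 1].
Proof.
move=> v0 /existsP [i /andP [/eqP vi /forallP H]].
have Hj : forall j : nat, (j < i)%N -> (j < 4)%N -> crd v j = 0.
  move=> j ji j4; have := H (Ordinal j4); rewrite /= ji /= => /eqP.
  by rewrite vcrd.
rewrite vcrd in vi.
have E := row4_eta v; rewrite v0 in E.
clear H; case: i vi Hj => [[|[|[|[|k]]]] Hk] //= vi Hj.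
- by move: vi; rewrite v0 => /esym/eqP; rewrite oner_eq0.
- by constructor 1; rewrite {1}E vi.
- by constructor 2; rewrite {1}E vi Hj.
- by constructor 3; rewrite {1}E vi !Hj.
Qed.

Lemma pnormal_row4 m z :
  [/\ pnormal (row4 0 1 m z), pnormal (row4 0 0 1 z) & pnormal (row4 0 0 0 1)].
Proof.
split; apply/existsP.
- exists (inord 1); rewrite vcrd inordK // crd_row4 //= eqxx /=.
  apply/forallP => j; apply/implyP; rewrite vcrd.
  by case: j => [[|[|[|[|k]]]] Hk] //= _; rewrite crd_row4.
- exists (inord 2); rewrite vcrd inordK // crd_row4 //= eqxx /=.
  apply/forallP => j; apply/implyP; rewrite vcrd.
  by case: j => [[|[|[|[|k]]]] Hk] //= _; rewrite crd_row4.
- exists (inord 3); rewrite vcrd inordK // crd_row4 //= eqxx /=.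
  apply/forallP => j; apply/implyP; rewrite vcrd.
  by case: j => [[|[|[|[|k]]]] Hk] //= _; rewrite crd_row4.
Qed.
Lemma hermF_row4 (q : nat) (j x y z : F) :
  hermF q (row4 j x y z) = z ^+ q * j + z * j ^+ q - x ^+ q.+1 - y ^+ q.+1.
Proof. by rewrite /hermF !crd_row4. Qed.

Lemma quadF_row4 a b c d e f (j x y z : F) :
  quadF a b c d e f (row4 j x y z) =
  a * x ^+ 2 + b * y ^+ 2 + c * x * y + d * x * j + e * y * j + f * j ^+ 2 - z * j.
Proof. by rewrite /quadF !crd_row4. Qed.

End Basic.

Lemma row4E (F : fieldType) (a b c d : F) (k : 'I_4) :
  row4 a b c d ord0 k = [:: a; b; c; d]`_k.
Proof. by rewrite mxE. Qed.


Section CinfSec.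
Variable F : finFieldType.
Variable q : nat.
Hypothesis q_gt0 : (0 < q)%N.

Definition Rset (a b c : F) : {set F} :=
  [set m : F | (a + c * m + b * m ^+ 2 == 0) && (1 + m ^+ q.+1 == 0)].
Definition pt (p : F * F) : 'rV[F]_4 := row4 0 1 p.1 p.2.
Definition Pinf : 'rV[F]_4 := row4 0 0 0 1.

Lemma Cinf_eq a b c d e f :
  Cinf q a b c d e f = Pinf |: [set pt p | p in setX (Rset a b c) setT].
Proof.
apply/setP => v; rewrite !inE.
apply/idP/idP.
- case/and4P => pv /eqP v0 /eqP hv /eqP qv.
  case: (pnormal_inf v0 pv) => E.
  + apply/orP; right; apply/imsetP; exists (crd v 2, crd v 3) => //.
    rewrite !inE andbT; move: hv qv; rewrite E hermF_row4 quadF_row4 expr0n.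
    rewrite eqn0Ngt q_gt0 /= !mulr0 !add0r expr1n => /eqP.
    rewrite !crd_row4 //= -opprD oppr_eq0 => ->; rewrite andbT.
    by move=> h; apply/eqP; rewrite -h; ring.
  + move: hv; rewrite E hermF_row4 expr0n eqn0Ngt q_gt0 /= !mulr0 !add0r expr1n.
    by rewrite expr0n /= oppr0 sub0r => /eqP; rewrite oppr_eq0 oner_eq0.
  + by rewrite E eqxx.
- case/orP => [/eqP -> | /imsetP [[m z] /setXP [] ]].
    have [_ _ p3] := pnormal_row4 (0:F) 0.
    rewrite /Pinf p3 hermF_row4 quadF_row4 !crd_row4 //=.
    by rewrite !expr0n /= eqn0Ngt q_gt0 /= !(mulr0, mul0r, subr0, addr0) eqxx.
  rewrite inE /= => /andP [/eqP h1 /eqP h2] _ ->.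
  have [p1 _ _] := pnormal_row4 m z.
  rewrite /pt /= p1 hermF_row4 quadF_row4 !crd_row4 //=.
  rewrite expr0n eqn0Ngt q_gt0 /= !mulr0 !add0r expr1n.
  rewrite eqxx /=; apply/andP; split; first by rewrite -opprD h2 oppr0.
  by apply/eqP; transitivity (a + c * m + b * m ^+ 2); [ring | exact h1].
Qed.
End CinfSec.


Section Lines.
Variable F : fieldType.

Definition Lmat (m : F) : 'M[F]_(2,4) :=
  \matrix_(i < 2, j < 4) (if i == ord0 then row4 0 1 m 0 else row4 0 0 0 1) ord0 j.

Lemma row4_sub m (x y : F) : (row4 0 x (x * m) y <= Lmat m)%MS.
Proof.
apply/submxP; exists (\row_(i<2) (if i == ord0 then x else y)).
apply/rowP => k; rewrite !mxE big_ord_recr big_ord_recr big_ord0 /= !mxE /=.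
by case: k => [[|[|[|[|k]]]] Hk] //=; ring.
Qed.

Lemma Lmat_line m : is_line (Lmat m).
Proof.
rewrite /is_line; apply/eqP; rewrite eqn_leq rank_leq_row /=.
pose K : 'M[F]_(4,2) := \matrix_(i < 4, j < 2)
   (if (i == 1 :> nat) && (j == 0 :> nat) then 1
    else if (i == 3 :> nat) && (j == 1 :> nat) then 1 else 0).
have EK : Lmat m *m K = 1%:M.
  apply/matrixP => i j; rewrite !mxE !big_ord_recr big_ord0 /= !mxE /=.
  by case: i => [[|[|i]] Hi]; case: j => [[|[|j]] Hj] //=; rewrite !row4E /=; ring.
by apply: (leq_trans _ (mxrankM_maxl (Lmat m) K)); rewrite EK mxrank1.
Qed.

Lemma Lmat_neq m1 m2 : m1 != m2 -> ~~ (Lmat m1 == Lmat m2)%MS.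
Proof.
move=> ne; apply/negP => /andP [le _].
have /submxP [D] := submx_trans (row_sub ord0 (Lmat m1)) le.
move/rowP => H; move: (H (inord 1)) (H (inord 2)).
rewrite !mxE !big_ord_recr !big_ord0 /= !mxE /= !inordK //= => h1 h2.
move/eqP: ne; apply; rewrite h2.
have -> : D 0 (widen_ord (leqnSn 1) ord_max) = 1 by rewrite h1; ring.
ring.
Qed.
End Lines.


Arguments Pinf {F}.
Section Classif.
Variable F : finFieldType.
Variable q : nat.
Hypothesis q_gt0 : (0 < q)%N.
Hypothesis cardF : #|F| = (q ^ 2)%N.

Lemma pt_inj : injective (@pt F).
Proof. by move=> [m z] [m' z'] /row4_inj [_ _ /= -> ->]. Qed.

Lemma card_Cinf (a b c d e f : F) :
  #|Cinf q a b c d e f| = (1 + #|Rset q a b c| * q ^ 2)%N.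
Proof.
rewrite (Cinf_eq q_gt0) cardsU1 card_imset; last exact: pt_inj.
rewrite cardsX cardsT cardF.
suff -> : Pinf \notin [set pt p | p in setX (Rset q a b c) setT] by [].
apply/imsetP => [[[m z] _ /row4_inj [_ /eqP]]].
by rewrite eq_sym oner_eq0.
Qed.

Lemma Cinf_mem (a b c d e f : F) v : v \in Cinf q a b c d e f ->
  v = Pinf \/ exists m z, m \in Rset q a b c /\ v = pt (m, z).
Proof.
rewrite (Cinf_eq q_gt0) !inE => /orP [/eqP ->| /imsetP [[m z]]]; first by left.
by rewrite inE => /andP [mR _] ->; right; exists m, z.
Qed.

Lemma sub_Lmat (a b c d e f : F) v m : v \in Cinf q a b c d e f ->
  v = Pinf \/ (exists z, v = pt (m, z)) -> (v <= Lmat m)%MS.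
Proof.
move=> _ [->| [z ->]].
  by have := row4_sub m 0 1; rewrite mul0r.
by have := row4_sub m 1 z; rewrite mul1r.
Qed.

Lemma case0 (a b c d e f : F) : Rset q a b c = set0 -> one_point (Cinf q a b c d e f).
Proof. by move=> E; rewrite /one_point card_Cinf E cards0. Qed.

Lemma case1 (a b c d e f : F) m : Rset q a b c = [set m] ->
  points_on_one_line q (Cinf q a b c d e f).
Proof.
move=> E; split; first by rewrite card_Cinf E cards1 mul1n addnC.
exists (Lmat m); split; first exact: Lmat_line.
move=> v vC; apply: (sub_Lmat vC).
case: (Cinf_mem vC) => [->| [m' [z [mR ->]]]]; first by left.
by right; exists z; move: mR; rewrite E inE => /eqP ->.
Qed.

Lemma case2 (a b c d e f : F) m1 m2 : m1 != m2 -> Rset q a b c = [set m1; m2] ->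
  points_on_two_lines q (Cinf q a b c d e f).
Proof.
move=> ne E; split; first by rewrite card_Cinf E cards2 ne mul2n addnC -mul2n.
exists (Lmat m1), (Lmat m2); split; try exact: Lmat_line; first exact: Lmat_neq.
move=> v vC.
case: (Cinf_mem vC) => [->| [m' [z [mR ->]]]].
  by left; have := row4_sub m1 0 1; rewrite mul0r.
move: mR; rewrite E !inE => /orP [] /eqP ->.
  by left; have := row4_sub m1 1 z; rewrite mul1r.
by right; have := row4_sub m2 1 z; rewrite mul1r.
Qed.
End Classif.


Section Cone.
Variable F : fieldType.
Hypothesis two0 : (2 : F) = 0.

Lemma row4D (a b c d a' b' c' d' : F) :
  row4 a b c d + row4 a' b' c' d' = row4 (a + a') (b + b') (c + c') (d + d').
Proof. by apply/rowP => k; rewrite !mxE; case: k => [[|[|[|[|k]]]] Hk]. Qed.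

Definition polar (a b c d e f : F) (u w : 'rV[F]_4) :=
  quadF a b c d e f (u + w) - quadF a b c d e f u - quadF a b c d e f w.

Lemma polarE (a b c d e f : F) u0 u1 u2 u3 w0 w1 w2 w3 :
  polar a b c d e f (row4 u0 u1 u2 u3) (row4 w0 w1 w2 w3) =
  c * (u1 * w2 + u2 * w1) + d * (u1 * w0 + u0 * w1) + e * (u2 * w0 + u0 * w2)
  - (u3 * w0 + u0 * w3).
Proof.
rewrite /polar row4D !quadF_row4.
transitivity (2 * (a * u1 * w1 + b * u2 * w2 + f * u0 * w0) +
  (c * (u1 * w2 + u2 * w1) + d * (u1 * w0 + u0 * w1) + e * (u2 * w0 + u0 * w2)
  - (u3 * w0 + u0 * w3))); first ring.
by rewrite two0 mul0r add0r.
Qed.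

Definition trunc3 (v : 'rV[F]_4) : 'rV[F]_3 := \row_(j < 3) v ord0 (widen_ord (leqnSn 3) j).

Lemma trunc3_e3 u : trunc3 (u + row4 0 0 0 1) = trunc3 u.
Proof.
apply/rowP => j; rewrite !mxE.
by case: j => [[|[|[|j]]] Hj] //=; rewrite addr0.
Qed.

Lemma quadF0 (a b c d e f : F) : quadF a b c d e f 0 = 0.
Proof. by rewrite /quadF /crd !mxE; ring. Qed.

Lemma cone_c0 (a b c d e f : F) :
  quadratic_cone (quadF a b c d e f) -> c = 0.
Proof.
case=> M [G [Mu [_ HG]]].
set Q := quadF a b c d e f in HG *.
set w := row4 0 0 0 1 *m M.
have Qw : Q w = 0.
  rewrite /w HG -[row4 0 0 0 1]add0r -/(trunc3 _) trunc3_e3.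
  by rewrite /trunc3 -HG mul0mx /Q quadF0.
have HQ u : Q (u + w) = Q u.
  have -> : u = (u *m invmx M) *m M by rewrite mulmxKV.
  by rewrite /w -mulmxDl !HG -/(trunc3 _) trunc3_e3.
have Hp u : polar a b c d e f u w = 0.
  by rewrite /polar -/Q HQ subrr Qw subr0.
move: Hp; rewrite [w]row4_eta.
set w0 := crd w 0; set w1 := crd w 1; set w2 := crd w 2; set w3 := crd w 3.
move=> Hp.
have h0 : w0 = 0.
  by apply/eqP; rewrite -oppr_eq0; apply/eqP; rewrite -(Hp (row4 0 0 0 1)) polarE; ring.
have h1 : c * w2 = 0.
  by rewrite -(Hp (row4 0 1 0 0)) polarE h0; ring.
have h2 : c * w1 = 0.
  by rewrite -(Hp (row4 0 0 1 0)) polarE h0; ring.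
have h3 : d * w1 + e * w2 - w3 = 0.
  by rewrite -(Hp (row4 1 0 0 0)) polarE h0; ring.
have [//|cn0] := eqVneq c 0.
move/eqP: h1; rewrite mulf_eq0 (negbTE cn0) /= => /eqP h1.
move/eqP: h2; rewrite mulf_eq0 (negbTE cn0) /= => /eqP h2.
move: h3; rewrite h1 h2 !mulr0 add0r sub0r => /eqP; rewrite oppr_eq0 => /eqP h3.
have w_0 : w = 0.
  by rewrite [w]row4_eta -/w0 -/w1 -/w2 -/w3 h0 h1 h2 h3; apply/rowP => k; rewrite !mxE; case: k => [[|[|[|[|k]]]] Hk].
have : row4 0 0 0 1 = 0 :> 'rV[F]_4.
  by rewrite -[row4 0 0 0 1](mulmxK Mu) -/w w_0 mul0mx.
move/rowP => /(_ ord_max); rewrite !mxE /=.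
by move/eqP; rewrite oner_eq0.
Qed.
End Cone.


Section Irr.
Variable F : fieldType.

Lemma linF_row4 (a b c d x y z t : F) :
  linF (row4 a b c d) (row4 x y z t) = a * x + b * y + c * z + d * t.
Proof. by rewrite /linF !big_ord_recr big_ord0 /= !row4E /= add0r. Qed.

Ltac simp := rewrite ?(mul0r, mulr0, add0r, addr0, mul1r, mulr1, sub0r, subr0, expr0n, expr1n, mulr0n, mulr1n) /=.

Lemma reducible0 (d e f : F) : ~ irreducible_quadric (quadF 0 0 0 d e f).
Proof.
apply; exists (row4 1 0 0 0), (row4 f d e (-1)) => v.
rewrite [v]row4_eta quadF_row4 !linF_row4; ring.
Qed.

Lemma irreducible_abc (a b c d e f : F) :
  (a != 0) || (b != 0) || (c != 0) -> irreducible_quadric (quadF a b c d e f).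
Proof.
move=> nz [l1 [l2 H]].
move: H; rewrite [l1]row4_eta [l2]row4_eta.
move: (crd l1 0) (crd l1 1) (crd l1 2) (crd l1 3) => p0 p1 p2 p3.
move: (crd l2 0) (crd l2 1) (crd l2 2) (crd l2 3) => r0 r1 r2 r3 H.
have E3 := H (row4 0 0 0 1).
have E0 := H (row4 1 0 0 0).
have E03 := H (row4 1 0 0 1).
have E1 := H (row4 0 1 0 0).
have E13 := H (row4 0 1 0 1).
have E2 := H (row4 0 0 1 0).
have E23 := H (row4 0 0 1 1).
have E12 := H (row4 0 1 1 0).
move: E3 E0 E03 E1 E13 E2 E23 E12; rewrite !quadF_row4 !linF_row4; simp.
move=> E3 E0 E03 E1 E13 E2 E23 E12.
have K0 : p0 * r3 + p3 * r0 = -1.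
  transitivity ((p0 + p3) * (r0 + r3) - p0 * r0 - p3 * r3); first ring.
  by rewrite -E03 -E0 -E3; ring.
have K1 : p1 * r3 + p3 * r1 = 0.
  transitivity ((p1 + p3) * (r1 + r3) - p1 * r1 - p3 * r3); first ring.
  by rewrite -E13 -E1 -E3; ring.
have K2 : p2 * r3 + p3 * r2 = 0.
  transitivity ((p2 + p3) * (r2 + r3) - p2 * r2 - p3 * r3); first ring.
  by rewrite -E23 -E2 -E3; ring.
have K12 : c = p1 * r2 + p2 * r1.
  transitivity ((p1 + p2) * (r1 + r2) - p1 * r1 - p2 * r2); last ring.
  by rewrite -E12 -E1 -E2; ring.
move: nz; rewrite E1 E2 K12.
have /eqP := esym E3; rewrite mulf_eq0 => /orP [] /eqP z3.
- move: K0 K1 K2; rewrite z3 !mul0r !addr0 => K0 K1 K2.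
  have r3n : r3 != 0 by apply/eqP => r0'; move: K0; rewrite r0' mulr0 => /eqP; rewrite eq_sym oppr_eq0 oner_eq0.
  move/eqP: K1; rewrite mulf_eq0 (negbTE r3n) orbF => /eqP ->.
  move/eqP: K2; rewrite mulf_eq0 (negbTE r3n) orbF => /eqP ->.
  by rewrite !mul0r add0r eqxx.
- move: K0 K1 K2; rewrite z3 !mulr0 !add0r => K0 K1 K2.
  have p3n : p3 != 0 by apply/eqP => r0'; move: K0; rewrite r0' mul0r => /eqP; rewrite eq_sym oppr_eq0 oner_eq0.
  move/eqP: K1; rewrite mulf_eq0 (negbTE p3n) /= => /eqP ->.
  move/eqP: K2; rewrite mulf_eq0 (negbTE p3n) /= => /eqP ->.
  by rewrite !mulr0 add0r eqxx.
Qed.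
End Irr.


Lemma char2 (F : finFieldType) h q : q = (2 ^ h)%N -> #|F| = (q ^ 2)%N -> (2 : F) = 0.
Proof.
move=> -> cF.
have p2 : 2 \in [pchar F].
  by apply: (@card_finPcharP _ _ (h * 2)) => //; rewrite cF expnM.
exact: pcharf0 p2.
Qed.

Lemma set_le1 (T : finType) (S : {set T}) :
  (forall x y, x \in S -> y \in S -> x = y) ->
  S = set0 \/ exists x, S = [set x].
Proof.
move=> H; have [->|[x xS]] := set_0Vmem S; first by left.
right; exists x; apply/setP => y; rewrite inE.
apply/idP/eqP => [yS | ->//]; exact: H.
Qed.

Lemma set_le2 (T : finType) (S : {set T}) :
  (forall x y z, x \in S -> y \in S -> z \in S -> [\/ x = y, x = z | y = z]) ->
  [\/ S = set0, exists x, S = [set x] | exists x y, x != y /\ S = [set x; y]].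
Proof.
move=> H; have [->|[x xS]] := set_0Vmem S; first by constructor 1.
have [E|[y]] := set_0Vmem (S :\ x).
  constructor 2; exists x; apply/setP => y; rewrite inE.
  apply/idP/eqP => [yS | ->//].
  case: (eqVneq y x) => // yx.
  have : y \in S :\ x by rewrite !inE yx yS.
  by rewrite E inE.
rewrite !inE => /andP [yx yS].
constructor 3; exists x, y; split; first by rewrite eq_sym.
apply/setP => z; rewrite !inE.
apply/idP/idP => [zS | /orP [] /eqP -> //].
case: (H x y z xS yS zS) => [xy | -> | ->]; rewrite ?eqxx ?orbT //.
by move: yx; rewrite xy eqxx.
Qed.

Section Roots.
Variable F : fieldType.

Lemma roots3 (a b c x y z : F) :
  a + c * x + b * x ^+ 2 = 0 -> a + c * y + b * y ^+ 2 = 0 -> a + c * z + b * z ^+ 2 = 0 ->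
  x != y -> x != z -> y != z -> [/\ a = 0, b = 0 & c = 0].
Proof.
move=> hx hy hz nxy nxz nyz.
have Hxy : (x - y) * (c + b * (x + y)) = 0.
  transitivity ((a + c * x + b * x ^+ 2) - (a + c * y + b * y ^+ 2)); first ring.
  by rewrite hx hy subrr.
have Hxz : (x - z) * (c + b * (x + z)) = 0.
  transitivity ((a + c * x + b * x ^+ 2) - (a + c * z + b * z ^+ 2)); first ring.
  by rewrite hx hz subrr.
move/eqP: Hxy; rewrite mulf_eq0 subr_eq0 (negbTE nxy) /= => /eqP Hxy.
move/eqP: Hxz; rewrite mulf_eq0 subr_eq0 (negbTE nxz) /= => /eqP Hxz.
have : b * (y - z) = 0.
  transitivity ((c + b * (x + y)) - (c + b * (x + z))); first ring.
  by rewrite Hxy Hxz subrr.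
move/eqP; rewrite mulf_eq0 subr_eq0 (negbTE nyz) orbF => /eqP b0.
move: Hxy; rewrite b0 mul0r addr0 => c0.
move: hx; rewrite b0 c0 !mul0r !addr0 => a0.
by split.
Qed.

Lemma roots2_c0 (a b x y : F) : (2 : F) = 0 ->
  a + 0 * x + b * x ^+ 2 = 0 -> a + 0 * y + b * y ^+ 2 = 0 -> x != y ->
  a = 0 /\ b = 0.
Proof.
move=> two0 hx hy nxy.
have H : b * ((x - y) * (x - y)) = 0.
  transitivity ((a + 0 * x + b * x ^+ 2) - (a + 0 * y + b * y ^+ 2) + 2 * (b * y * (y - x))).
    ring.
  by rewrite hx hy subrr two0 mul0r addr0.
have nxy' : x - y != 0 by rewrite subr_eq0.
move/eqP: H; rewrite !mulf_eq0 (negbTE nxy') !orbF => /eqP b0.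
by move: hx; rewrite b0 !mul0r !addr0.
Qed.
End Roots.


Section Upper.
Variable F : finFieldType.
Variable q : nat.
Hypothesis q_gt0 : (0 < q)%N.
Hypothesis cardF : #|F| = (q ^ 2)%N.
Hypothesis two0 : (2 : F) = 0.

Lemma nz_abc (a b c d e f : F) : irreducible_quadric (quadF a b c d e f) ->
  (a != 0) || (b != 0) || (c != 0).
Proof.
move=> irr; apply/negP => /negP.
rewrite !negb_or !negbK => /andP [/andP [/eqP a0 /eqP b0] /eqP c0].
by move: irr; rewrite a0 b0 c0; apply: reducible0.
Qed.

Lemma Rroot (a b c m : F) : m \in Rset q a b c -> a + c * m + b * m ^+ 2 = 0.
Proof. by rewrite inE => /andP [/eqP]. Qed.

Lemma upper_cone (a b c d e f : F) : irreducible_quadric (quadF a b c d e f) ->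
  quadratic_cone (quadF a b c d e f) ->
  one_point (Cinf q a b c d e f) \/ points_on_one_line q (Cinf q a b c d e f).
Proof.
move=> irr cone; have nz := nz_abc irr.
have c0 := cone_c0 two0 cone.
have Hle : forall x y, x \in Rset q a b c -> y \in Rset q a b c -> x = y.
  move=> x y xR yR; case: (eqVneq x y) => // nxy.
  have hx := Rroot xR; have hy := Rroot yR; rewrite c0 in hx hy.
  have [a0 b0] := roots2_c0 two0 hx hy nxy.
  by move: nz; rewrite a0 b0 c0 eqxx.
have [E|[m E]] := set_le1 Hle.
- by left; apply: case0.
- by right; apply: case1 E.
Qed.

Lemma upper_hyp (a b c d e f : F) : irreducible_quadric (quadF a b c d e f) ->
  [\/ one_point (Cinf q a b c d e f),
      points_on_one_line q (Cinf q a b c d e f)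
    | points_on_two_lines q (Cinf q a b c d e f)].
Proof.
move=> irr; have nz := nz_abc irr.
have Hle : forall x y z, x \in Rset q a b c -> y \in Rset q a b c -> z \in Rset q a b c ->
   [\/ x = y, x = z | y = z].
  move=> x y z xR yR zR.
  case: (eqVneq x y) => [|nxy]; first by constructor 1.
  case: (eqVneq x z) => [|nxz]; first by constructor 2.
  case: (eqVneq y z) => [|nyz]; first by constructor 3.
  have [a0 b0 c0] := roots3 (Rroot xR) (Rroot yR) (Rroot zR) nxy nxz nyz.
  by move: nz; rewrite a0 b0 c0 eqxx.
have [E|[m E]|[m1 [m2 [ne E]]]] := set_le2 Hle.
- by constructor 1; apply: case0.
- by constructor 2; apply: case1 E.
- by constructor 3; apply: case2 ne E.
Qed.
End Upper.


Section Mx.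
Variable F : fieldType.

Definition mx4 (r0 r1 r2 r3 : 'rV[F]_4) : 'M[F]_4 :=
  \matrix_(i < 4, j < 4) ([:: r0; r1; r2; r3]`_i) ord0 j.

Lemma row4Z (k a b c d : F) : k *: row4 a b c d = row4 (k * a) (k * b) (k * c) (k * d).
Proof. by apply/rowP => i; rewrite !mxE; case: i => [[|[|[|[|i]]]] Hi]. Qed.

Lemma mulmx4 (v : 'rV[F]_4) r0 r1 r2 r3 :
  v *m mx4 r0 r1 r2 r3 = crd v 0 *: r0 + crd v 1 *: r1 + crd v 2 *: r2 + crd v 3 *: r3.
Proof.
apply/rowP => k; rewrite !mxE !big_ord_recr big_ord0 /= !mxE !vcrd add0r /=.
by [].
Qed.

Lemma mx4_mul (a0 a1 a2 a3 b0 b1 b2 b3 c0 c1 c2 c3 d0 d1 d2 d3 : F) r0 r1 r2 r3 :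
  mx4 (row4 a0 a1 a2 a3) (row4 b0 b1 b2 b3) (row4 c0 c1 c2 c3) (row4 d0 d1 d2 d3)
  *m mx4 r0 r1 r2 r3 =
  mx4 (a0 *: r0 + a1 *: r1 + a2 *: r2 + a3 *: r3)
      (b0 *: r0 + b1 *: r1 + b2 *: r2 + b3 *: r3)
      (c0 *: r0 + c1 *: r1 + c2 *: r2 + c3 *: r3)
      (d0 *: r0 + d1 *: r1 + d2 *: r2 + d3 *: r3).
Proof.
apply/matrixP => i j; rewrite !mxE !big_ord_recr big_ord0 /= !mxE.
by case: i => [[|[|[|[|i]]]] Hi] //=; rewrite !mxE /=; ring.
Qed.

Lemma mx4_1 : mx4 (row4 1 0 0 0) (row4 0 1 0 0) (row4 0 0 1 0) (row4 0 0 0 1) = 1%:M.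
Proof.
apply/matrixP => i j; rewrite !mxE.
by case: i => [[|[|[|[|i]]]] Hi]; case: j => [[|[|[|[|j]]]] Hj] //=; rewrite row4E.
Qed.
End Mx.


Section Wit.
Variable F : fieldType.

Lemma crd_trunc (v : 'rV[F]_4) (k : nat) : (k < 3)%N ->
  crd (\row_(j < 3) v ord0 (widen_ord (leqnSn 3) j)) k = crd v k.
Proof.
move=> k3; rewrite /crd mxE; congr (v ord0 _); apply/val_inj.
by rewrite /= !inordK // (leq_trans k3).
Qed.

Lemma cone_ex (l : F) : quadratic_cone (quadF (l ^+ 2) 1 (- (2 * l)) 0 0 0).
Proof.
exists (mx4 (row4 1 0 0 0) (row4 0 0 0 (-1)) (row4 0 0 1 0) (row4 0 1 l 0)).
exists (fun w => crd w 0 * crd w 1 + crd w 2 ^+ 2).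
split; [|split].
- apply: (fun H => proj1 (mulmx1_unit (B := mx4 (row4 1 0 0 0) (row4 0 0 (-l) 1) (row4 0 0 1 0) (row4 0 (-1) 0 0)) H)).
  rewrite mx4_mul !row4Z !row4D -mx4_1.
  by congr (mx4 (row4 _ _ _ _) (row4 _ _ _ _) (row4 _ _ _ _) (row4 _ _ _ _)); ring.
- exists 1%:M, 1; split; first exact: unitmx1.
  by split; [exact: oner_neq0 | move=> w; rewrite mulmx1 mul1r].
- move=> v; rewrite mulmx4 !row4Z !row4D quadF_row4 !crd_trunc //; ring.
Qed.

Lemma hyp_ex (p1 p2 r1 r2 : F) : p1 * r2 - p2 * r1 != 0 ->
  hyperbolic_quadric (quadF (p1 * r1) (p2 * r2) (p1 * r2 + p2 * r1) 0 0 0).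
Proof.
move=> Dn0; set D := p1 * r2 - p2 * r1.
exists (mx4 (row4 1 0 0 0) (row4 0 0 0 (-1)) (row4 0 (r2 / D) (- (r1 / D)) 0)
            (row4 0 (- (p2 / D)) (p1 / D) 0)), 1.
split; [|split; first exact: oner_neq0].
- apply: (fun H => proj1 (mulmx1_unit (B := mx4 (row4 1 0 0 0) (row4 0 0 p1 r1) (row4 0 0 p2 r2) (row4 0 (-1) 0 0)) H)).
  rewrite mx4_mul !row4Z !row4D -mx4_1.
  by congr (mx4 (row4 _ _ _ _) (row4 _ _ _ _) (row4 _ _ _ _) (row4 _ _ _ _)); rewrite /D; field.
- by move=> v; rewrite mulmx4 !row4Z !row4D quadF_row4 /D; field.
Qed.
End Wit.


Lemma cardF_gt1 (F : finFieldType) : (1 < #|F|)%N.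
Proof.
apply/card_gt1P; exists 0 => //; exists 1 => //.
by rewrite eq_sym oner_neq0.
Qed.

Lemma norm_elt (F : finFieldType) q : #|F| = (q ^ 2)%N ->
  exists nu : F, nu != 1 /\ nu ^+ q.+1 = 1.
Proof.
move=> cF.
have q1 : (1 < q)%N.
  have := cardF_gt1 F; rewrite cF; case: q {cF} => [|[|q]] //.
have [y /andP [yn0 yq]] : exists y : F, (y != 0) && (y ^+ q.-1 != 1).
  case: (boolP [exists y : F, (y != 0) && (y ^+ q.-1 != 1)]) => [/existsP //|]; rewrite negb_exists => /forallP H; exfalso.
  have Hr : all (root ('X^(q.-1) - 1)) (enum [pred y : F | y != 0]).
    apply/allP => y; rewrite mem_enum inE => yn0.
    have := H y; rewrite yn0 /= negbK => /eqP hy.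
    by rewrite /root !hornerE hy subrr.
  have := max_poly_roots _ Hr (enum_uniq _).
  rewrite size_Xn_sub_1; last by lia.
  rewrite -cardE cardC1 cF.
  move=> Hm.
  have Hp : 'X^(q.-1) - 1 != 0 :> {poly F}.
    apply/eqP => /(congr1 (size : {poly F} -> nat)).
    rewrite size_Xn_sub_1 ?size_poly0 //; lia.
  have := Hm Hp; rewrite expnS expn1; nia.
exists (y ^+ q.-1); split => //.
rewrite -exprM.
have -> : (q.-1 * q.+1 = (q ^ 2).-1)%N.
  suff : (q ^ 2 = (q * q))%N by lia.
  by rewrite expnS expn1.
have hy : y ^+ #|F| = y := expf_card y.
rewrite cF in hy.
have : y ^+ (q ^ 2).-1 * y = 1 * y.
  rewrite -exprSr prednK ?mul1r //.
  by rewrite expn_gt0; lia.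
by move/(mulIf yn0).
Qed.


Lemma Rset_eq (F : finFieldType) q (a b c r1 r2 : F) :
  (forall m, a + c * m + b * m ^+ 2 = (m - r1) * (m - r2)) ->
  forall m, (m \in Rset q a b c) = ((m == r1) || (m == r2)) && (1 + m ^+ q.+1 == 0).
Proof.
move=> Hf m; rewrite inE Hf mulf_eq0 !subr_eq0.
by [].
Qed.

Theorem lemma2 (F : finFieldType) (h q : nat) :
  q = (2 ^ h)%N -> #|F| = (q ^ 2)%N ->
  (forall a b c d e f : F,
     irreducible_quadric (quadF a b c d e f) ->
     (quadratic_cone (quadF a b c d e f) ->
        one_point (Cinf q a b c d e f) \/ points_on_one_line q (Cinf q a b c d e f)) /\
     (hyperbolic_quadric (quadF a b c d e f) ->
        [\/ one_point (Cinf q a b c d e f),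
            points_on_one_line q (Cinf q a b c d e f)
          | points_on_two_lines q (Cinf q a b c d e f)]))
  /\
  (* all cases actually occur *)
  (exists a b c d e f : F, [/\ irreducible_quadric (quadF a b c d e f),
       quadratic_cone (quadF a b c d e f) & one_point (Cinf q a b c d e f)]) /\
  (exists a b c d e f : F, [/\ irreducible_quadric (quadF a b c d e f),
       quadratic_cone (quadF a b c d e f) & points_on_one_line q (Cinf q a b c d e f)]) /\
  (exists a b c d e f : F, [/\ irreducible_quadric (quadF a b c d e f),
       hyperbolic_quadric (quadF a b c d e f) & one_point (Cinf q a b c d e f)]) /\
  (exists a b c d e f : F, [/\ irreducible_quadric (quadF a b c d e f),
       hyperbolic_quadric (quadF a b c d e f) & points_on_one_line q (Cinf q a b c d e f)]) /\
  (exists a b c d e f : F, [/\ irreducible_quadric (quadF a b c d e f),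
       hyperbolic_quadric (quadF a b c d e f) & points_on_two_lines q (Cinf q a b c d e f)]).
Proof.
move=> hq cF.
have two0 := char2 hq cF.
have q_gt0 : (0 < q)%N by rewrite hq expn_gt0.
have h11 : (1 + 1 : F) = 0 by rewrite -two0; ring.
have n0 : (1 + 0 ^+ q.+1 : F) != 0 by rewrite expr0n /= addr0 oner_neq0.
have n1 : (1 + 1 ^+ q.+1 : F) == 0 by rewrite expr1n h11.
have irr1 (a c : F) : irreducible_quadric (quadF a 1 c 0 0 0).
  by apply: irreducible_abc; rewrite oner_neq0 orbT.
split.
  move=> a b c d e f irr; split => [cone|hyp].
    exact: upper_cone.
  exact: upper_hyp.
split.
  exists (0 ^+ 2), 1, (- (2 * 0)), 0, 0, 0; split; [exact: irr1 | exact: cone_ex |].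
  apply: case0 => //; apply/setP => m.
  rewrite (@Rset_eq _ _ _ _ _ 0 0); last by move=> m'; ring.
  by rewrite inE orbb; case: (eqVneq m 0) => [->|] //=; rewrite (negbTE n0).
split.
  exists (1 ^+ 2), 1, (- (2 * 1)), 0, 0, 0; split; [exact: irr1 | exact: cone_ex |].
  apply: (@case1 _ _ q_gt0 cF _ _ _ _ _ _ 1); apply/setP => m.
  rewrite (@Rset_eq _ _ _ _ _ 1 1); last by move=> m'; ring.
  by rewrite inE orbb; case: (eqVneq m 1) => [->|] //=; rewrite n1.
split.
  exists (1 * 0), (0 * 1), (1 * 1 + 0 * 0), 0, 0, 0; split.
  - by apply: irreducible_abc; apply/orP; right; rewrite mulr0 addr0 mulr1 oner_neq0.
  - by apply: hyp_ex; rewrite !mulr1 !mulr0 subr0 oner_neq0.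
  apply: case0 => //; apply/setP => m; rewrite !inE.
  have -> : (1 * 0 + (1 * 1 + 0 * 0) * m + 0 * 1 * m ^+ 2 : F) = m by ring.
  by case: (eqVneq m 0) => [->|] //=; rewrite (negbTE n0).
split.
  exists (0 * -1), (1 * 1), (0 * 1 + 1 * -1), 0, 0, 0; split.
  - by apply: irreducible_abc; rewrite mulr1 oner_neq0 orbT.
  - by apply: hyp_ex; rewrite (_ : (0 * 1 - 1 * -1 : F) = 1) ?oner_neq0 //; ring.
  apply: (@case1 _ _ q_gt0 cF _ _ _ _ _ _ 1); apply/setP => m.
  rewrite (@Rset_eq _ _ _ _ _ 0 1); last by move=> m'; ring.
  rewrite inE; case: (eqVneq m 1) => [->|] /=; first by rewrite n1 orbT.
  by case: (eqVneq m 0) => [->|] //=; rewrite (negbTE n0).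
have [nu [nu1 nuq]] := norm_elt cF.
exists ((-1) * (- nu)), (1 * 1), ((-1) * 1 + 1 * (- nu)), 0, 0, 0; split.
- by apply: irreducible_abc; rewrite mulr1 oner_neq0 orbT.
- apply: hyp_ex; rewrite (_ : ((-1) * 1 - 1 * (- nu) : F) = nu - 1); last by ring.
  by rewrite subr_eq0.
apply: (@case2 _ _ q_gt0 cF _ _ _ _ _ _ 1 nu); first by rewrite eq_sym.
apply/setP => m.
rewrite (@Rset_eq _ _ _ _ _ 1 nu); last by move=> m'; ring.
rewrite !inE; case: (eqVneq m 1) => [->|] /=; first by rewrite n1.
case: (eqVneq m nu) => [->|] //=.
by rewrite nuq h11 eqxx.
Qed.
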